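(* Assume the setting and algorithm described in the context, with any step-size $\alpha>0$. Let $\beta>0$ be arbitrary and $\theta:=1-\frac1m+\alpha\beta+\frac{2\alpha^2L^2}{n}$. Then for all $k\ge0$, almost surely, $$\mathbb E\big[t^{k+1}\,|\,\mathcal F^k\big]\le\theta\,t^k+\Big(2\alpha^2+\frac\alpha\beta\Big)\|\overline{\nabla\mathbf f}(x^k)\|^2+\Big(\frac{2\alpha^2L^2}{n}+\frac2m\Big)\frac1n\|x^k-Jx^k\|^2 .$$
   Context: Setting. Let $n,m,p\ge1$ be integers and $\mathcal V=\{1,\dots,n\}$. For each $i\in\mathcal V$ and $j\in\{1,\dots,m\}$, $f_{i,j}:\mathbb R^p\to\mathbb R$ is differentiable and $L$-smooth for some $L>0$, i.e. $\|\nabla f_{i,j}(x)-\nabla f_{i,j}(y)\|\le L\|x-y\|$ for all $x,y\in\mathbb R^p$. Let $f_i:=\frac1m\sum_{j=1}^m f_{i,j}$ and $F:=\frac1n\sum_{i=1}^n f_i$, and assume $F^*:=\inf_{x\in\mathbb R^p}F(x)>-\infty$. Let $\underline W=(\underline w_{ir})\in\mathbb R^{n\times n}$ be a nonnegative, primitive, doubly stochastic matrix ($\underline W\mathbf 1_n=\mathbf 1_n$, $\mathbf 1_n^\top\underline W=\mathbf 1_n^\top$), and let $\lambda\in[0,1)$ be its second largest singular value. Any expression with $\lambda$ in a denominator is read as $+\infty$ when $\lambda=0$. Algorithm GT-SAGA with step-size $\alpha>0$: fix a deterministic $\bar x^0\in\mathbb R^p$; for all $i\in\mathcal V$ set $x_i^0=\bar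 x^0$, $z_{i,j}^0=x_i^0$ for all $j$, $y_i^0=0$, $g_i^{-1}=0$. For $k=0,1,2,\dots$ and every $i\in\mathcal V$: draw $\tau_i^k$ uniformly from $\{1,\dots,m\}$; set $g_i^k=\nabla f_{i,\tau_i^k}(x_i^k)-\nabla f_{i,\tau_i^k}(z_{i,\tau_i^k}^k)+\frac1m\sum_{j=1}^m\nabla f_{i,j}(z_{i,j}^k)$; set $y_i^{k+1}=\sum_{r=1}^n\underline w_{ir}(y_r^k+g_r^k-g_r^{k-1})$; set $x_i^{k+1}=\sum_{r=1}^n\underline w_{ir}(x_r^k-\alpha y_r^{k+1})$; draw $s_i^k$ uniformly from $\{1,\dots,m\}$; set $z_{i,j}^{k+1}=x_i^k$ if $j=s_i^k$ and $z_{i,j}^{k+1}=z_{i,j}^k$ otherwise. The family $\{\tau_i^k,s_i^k: i\in\mathcal V,k\ge0\}$ is independent. Notation. $x^k,y^k,g^k\in\mathbb R^{np}$ stack the $x_i^k$, $y_i^k$, $g_i^k$; $\nabla\mathbf f(x^k)\in\mathbb R^{np}$ stacks $\nabla f_i(x_i^k)$, $i=1,\dots,n$; $W=\underline W\otimes I_p$, $J=(\frac1n\mathbf 1_n\mathbf 1_n^\top)\otimes I_p$; $\bar x^k=\frac1n\sum_i x_i^k$, $\bar g^k=\frac1n\sum_i g_i^k$, $\overline{\nabla\mathbf f}(x^k)=\frac1n\sum_i\nabla f_i(x_i^k)$. $\mathcal F^0$ is the trivial $\sigma$-algebra and $\mathcal F^k=\sigma(\{\tau_i^t,s_i^t:i\in\mathcal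 V,\ t\le k-1\})$ for $k\ge1$. $t^k:=\frac1n\sum_{i=1}^n\frac1m\sum_{j=1}^m\|\bar x^k-z_{i,j}^k\|^2$. $\|\nabla\mathbf f(x^0)\|^2:=\sum_{i=1}^n\|\nabla f_i(\bar x^0)\|^2$. Norms are Euclidean (spectral for matrices); vector and matrix inequalities are entrywise. *)

(* Defs.v *)
From HB Require Import structures.
From mathcomp Require Import all_boot all_order all_algebra.
From mathcomp Require Import all_classical all_reals all_analysis.
Set Implicit Arguments. Unset Strict Implicit. Unset Printing Implicit Defensive.
Import Order.TTheory GRing.Theory Num.Theory.
Import numFieldNormedType.Exports.
Local Open Scope ring_scope.

Section GTSAGA.
Variables (R : realType) (n m p : nat).

Definition sqnorm (v : 'rV[R]_p) : R := \sum_(j < p) (v 0 j) ^+ 2.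
Definition enorm (v : 'rV[R]_p) : R := Num.sqrt (sqnorm v).

Definition grad (f : 'rV[R]_p -> R) (x : 'rV[R]_p) : 'rV[R]_p :=
  \row_(j < p) ('d f x (delta_mx 0 j : 'rV[R]_p)).

Definition Lsmooth (L : R) (f : 'rV[R]_p -> R) : Prop :=
  (forall x, differentiable f x) /\
  forall x y, enorm (grad f x - grad f y) <= L * enorm (x - y).

Definition fi (f : 'I_n -> 'I_m -> 'rV[R]_p -> R) (i : 'I_n) (x : 'rV[R]_p) : R :=
  m%:R^-1 * \sum_(j < m) f i j x.

Definition Fobj (f : 'I_n -> 'I_m -> 'rV[R]_p -> R) (x : 'rV[R]_p) : R :=
  n%:R^-1 * \sum_(i < n) fi f i x.

Definition doubly_stochastic_nonneg (W : 'M[R]_n) : Prop :=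
  (forall i j, 0 <= W i j) /\
  (forall i, \sum_(r < n) W i r = 1) /\
  (forall r, \sum_(i < n) W i r = 1).

Definition primitive_mx (W : 'M[R]_n) : Prop :=
  exists k : nat, forall i j, 0 < (W ^+ k) i j.

(* State of GT-SAGA at iteration k: x^k, y^k, g^{k-1}, z^k_{i,j} *)
Record state := State {
  st_x : 'I_n -> 'rV[R]_p;
  st_y : 'I_n -> 'rV[R]_p;
  st_gprev : 'I_n -> 'rV[R]_p;
  st_z : 'I_n -> 'I_m -> 'rV[R]_p }.

Definition init_state (x0 : 'rV[R]_p) : state :=
  State (fun _ => x0) (fun _ => 0) (fun _ => 0) (fun _ _ => x0).

Definition gsaga (f : 'I_n -> 'I_m -> 'rV[R]_p -> R) (st : state)
  (tau : 'I_n -> 'I_m) (i : 'I_n) : 'rV[R]_p :=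
  grad (f i (tau i)) (st_x st i) - grad (f i (tau i)) (st_z st i (tau i))
  + m%:R^-1 *: \sum_(j < m) grad (f i j) (st_z st i j).

Definition step (f : 'I_n -> 'I_m -> 'rV[R]_p -> R) (W : 'M[R]_n) (alpha : R)
  (st : state) (tau s : 'I_n -> 'I_m) : state :=
  let g := gsaga f st tau in
  let y' := fun i => \sum_(r < n) W i r *: (st_y st r + g r - st_gprev st r) in
  let x' := fun i => \sum_(r < n) W i r *: (st_x st r - alpha *: y' r) in
  let z' := fun i j => if j == s i then st_x st i else st_z st i j in
  State x' y' g z'.

Fixpoint iterate (f : 'I_n -> 'I_m -> 'rV[R]_p -> R) (W : 'M[R]_n) (alpha : R)
  (x0 : 'rV[R]_p) (tau s : nat -> 'I_n -> 'I_m) (k : nat) : state :=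
  match k with
  | 0 => init_state x0
  | k'.+1 => step f W alpha (iterate f W alpha x0 tau s k') (tau k') (s k')
  end.

Definition xbar (st : state) : 'rV[R]_p := n%:R^-1 *: \sum_(i < n) st_x st i.

Definition tk (st : state) : R :=
  n%:R^-1 * \sum_(i < n) (m%:R^-1 * \sum_(j < m) sqnorm (xbar st - st_z st i j)).

Definition consensus_err (st : state) : R :=
  \sum_(i < n) sqnorm (st_x st i - xbar st).

Definition avg_grad (f : 'I_n -> 'I_m -> 'rV[R]_p -> R) (st : state) : 'rV[R]_p :=
  n%:R^-1 *: \sum_(i < n) grad (fi f i) (st_x st i).

Definition upd (d : nat -> 'I_n -> 'I_m) (k : nat) (a : 'I_n -> 'I_m) :
  nat -> 'I_n -> 'I_m := fun t => if t == k then a else d t.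

(* E[X | F^k]: F^k is generated by the draws at times < k; the draws
   tau^t, s^t for t >= k are independent of F^k and uniform, so the
   conditional expectation of a quantity X is the average of X over the
   (uniform, independent) draws tau^k, s^k in ('I_m)^n x ('I_m)^n, the
   draws at times < k being those of the given outcome (tau, s).
   (Quantities used below depend only on draws at times <= k.) *)
Definition condE_k (k : nat) (X : (nat -> 'I_n -> 'I_m) -> (nat -> 'I_n -> 'I_m) -> R)
  (tau s : nat -> 'I_n -> 'I_m) : R :=
  ((m ^ n)%:R * (m ^ n)%:R)^-1 *
  \sum_(ta : {ffun 'I_n -> 'I_m}) \sum_(sa : {ffun 'I_n -> 'I_m})
     X (upd tau k ta) (upd s k sa).

End GTSAGA.

(* Main.v *)
Require Import Defs.
From HB Require Import structures.
From mathcomp Require Import all_boot all_order all_algebra.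
From mathcomp Require Import all_classical all_reals all_analysis.
From mathcomp Require Import ring lra.
Import Order.TTheory GRing.Theory Num.Theory.
Local Open Scope ring_scope.

Section Vec.
Variables (R : realType) (p : nat).
Implicit Types (u v w : 'rV[R]_p).

Definition dot u v : R := \sum_(c < p) u 0 c * v 0 c.

Lemma sqnorm_ge0 v : 0 <= sqnorm v.
Proof. by apply: sumr_ge0 => c _; apply: sqr_ge0. Qed.

Lemma sqnormE v : sqnorm v = dot v v.
Proof. by apply: eq_bigr => c _; rewrite expr2. Qed.

Lemma sqnormBC u v : sqnorm (u - v) = sqnorm (v - u).
Proof. by apply: eq_bigr => c _; rewrite !mxE; ring. Qed.

Lemma sqnormBZ u w (a : R) :
  sqnorm (u - a *: w) = sqnorm u - 2 * a * dot u w + a ^+ 2 * sqnorm w.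
Proof.
rewrite /sqnorm /dot (eq_bigr (fun c => u 0 c ^+ 2 - 2 * a * (u 0 c * w 0 c) + a ^+ 2 * w 0 c ^+ 2)); last first.
  by move=> c _; rewrite !mxE; ring.
by rewrite big_split sumrB /= -!mulr_sumr.
Qed.

Lemma sqnormD_le u v : sqnorm (u + v) <= 2 * sqnorm u + 2 * sqnorm v.
Proof.
rewrite /sqnorm !mulr_sumr -big_split /=; apply: ler_sum => c _; rewrite !mxE.
have := sqr_ge0 (u 0 c - v 0 c); nra.
Qed.

Lemma young u v (a b : R) : 0 < a -> 0 < b ->
  - (2 * a * dot u v) <= a * b * sqnorm u + a / b * sqnorm v.
Proof.
move=> a0 b0; rewrite /sqnorm /dot mulr_sumr -sumrN !mulr_sumr -big_split /=.
apply: ler_sum => c _.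
have h : 0 <= a / b * (b * u 0 c + v 0 c) ^+ 2.
  by apply: mulr_ge0; [apply: divr_ge0; apply: ltW|apply: sqr_ge0].
rewrite -subr_ge0 opprK.
suff -> : a * b * u 0 c ^+ 2 + a / b * v 0 c ^+ 2 + 2 * a * (u 0 c * v 0 c) = a / b * (b * u 0 c + v 0 c) ^+ 2 by [].
by field; rewrite gt_eqF.
Qed.

Lemma dot_sumr I (r : seq I) (P : pred I) u (F : I -> 'rV[R]_p) :
  dot u (\sum_(i <- r | P i) F i) = \sum_(i <- r | P i) dot u (F i).
Proof.
rewrite /dot exchange_big /=; apply: eq_bigr => c _.
by rewrite summxE mulr_sumr.
Qed.

Lemma dot_suml I (r : seq I) (P : pred I) u (F : I -> 'rV[R]_p) :
  dot (\sum_(i <- r | P i) F i) u = \sum_(i <- r | P i) dot (F i) u.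
Proof.
rewrite /dot exchange_big /=; apply: eq_bigr => c _.
by rewrite summxE mulr_suml.
Qed.

Lemma dotZl a u v : dot (a *: u) v = a * dot u v.
Proof. by rewrite /dot mulr_sumr; apply: eq_bigr => c _; rewrite mxE mulrA. Qed.
Lemma dotZr a u v : dot u (a *: v) = a * dot u v.
Proof. by rewrite /dot mulr_sumr; apply: eq_bigr => c _; rewrite mxE mulrCA. Qed.
Lemma dotBl u v w : dot (u - v) w = dot u w - dot v w.
Proof. by rewrite /dot -sumrB; apply: eq_bigr => c _; rewrite !mxE mulrBl. Qed.
Lemma dot0l u : dot 0 u = 0.
Proof. by rewrite /dot big1 // => c _; rewrite mxE mul0r. Qed.

End Vec.
Section Expect.
Variables (R : realType) (n m : nat).
Hypothesis m0 : (0 < m)%N.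

Definition Ef (phi : {ffun 'I_n -> 'I_m} -> R) : R :=
  ((m ^ n)%:R)^-1 * \sum_(ta : {ffun 'I_n -> 'I_m}) phi ta.

Lemma mR0 : (m%:R : R) != 0.
Proof. by rewrite pnatr_eq0 -lt0n. Qed.

Lemma Eprod (phi : 'I_n -> 'I_m -> R) :
  Ef (fun ta => \prod_(k < n) phi k (ta k)) =
  \prod_(k < n) (m%:R^-1 * \sum_(j < m) phi k j).
Proof.
rewrite /Ef -bigA_distr_bigA big_split /= prodr_const card_ord.
by rewrite natrX exprVn.
Qed.

Lemma E1 (i : 'I_n) (F : 'I_m -> R) :
  Ef (fun ta => F (ta i)) = m%:R^-1 * \sum_(j < m) F j.
Proof.
have := Eprod (fun k j => if k == i then F j else 1).
rewrite (bigD1 i) //= eqxx [\prod_(k < n | k != i) _]big1 ?mulr1; last first.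
  move=> k ki; rewrite (negbTE ki) sumr_const card_ord mulVf //; exact: mR0.
move=> <-; congr Ef; apply: funext => ta.
by rewrite (bigD1 i) //= eqxx [\prod_(k < n | k != i) _]big1 ?mulr1 // => k ki; rewrite (negbTE ki).
Qed.

Lemma E2 (i i' : 'I_n) (F G : 'I_m -> R) : i != i' ->
  Ef (fun ta => F (ta i) * G (ta i')) =
  (m%:R^-1 * \sum_(j < m) F j) * (m%:R^-1 * \sum_(j < m) G j).
Proof.
move=> ii.
have := Eprod (fun k j => if k == i then F j else if k == i' then G j else 1).
rewrite (bigD1 i) //= ?eqxx (bigD1 i') //= eq_sym (negbTE ii) ?eqxx.
rewrite [\prod_(k < n | _ && _) _]big1 ?mulr1; last first.
  move=> k /andP[/negbTE -> /negbTE ->].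
  rewrite sumr_const card_ord mulVf //; exact: mR0.
move=> <-; congr Ef; apply: funext => ta.
rewrite (bigD1 i) //= ?eqxx (bigD1 i') //= eq_sym (negbTE ii) ?eqxx.
rewrite [\prod_(k < n | _ && _) _]big1 ?mulr1 // => k /andP[/negbTE -> /negbTE ->].
all: by []. Qed.

Lemma EfD phi psi : Ef (fun ta => phi ta + psi ta) = Ef phi + Ef psi.
Proof. by rewrite /Ef big_split mulrDr. Qed.
Lemma EfB phi psi : Ef (fun ta => phi ta - psi ta) = Ef phi - Ef psi.
Proof. by rewrite /Ef sumrB mulrBr. Qed.
Lemma EfZ c phi : Ef (fun ta => c * phi ta) = c * Ef phi.
Proof. by rewrite /Ef -mulr_sumr mulrCA. Qed.
Lemma Ef_sum I (r : seq I) (P : pred I) (phi : I -> {ffun 'I_n -> 'I_m} -> R) :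
  Ef (fun ta => \sum_(i <- r | P i) phi i ta) = \sum_(i <- r | P i) Ef (phi i).
Proof. by rewrite /Ef exchange_big mulr_sumr. Qed.
Lemma Ef_cst c : Ef (fun _ => c) = c.
Proof.
rewrite /Ef sumr_const card_ffun !card_ord. have -> : c *+ (m ^ n) = (m ^ n)%:R * c by rewrite mulr_natl. rewrite mulrA mulVf ?mul1r //.
by rewrite pnatr_eq0 expn_eq0 negb_and -lt0n m0.
Qed.
Lemma Ef_le phi psi : (forall ta, phi ta <= psi ta) -> Ef phi <= Ef psi.
Proof.
move=> h; rewrite /Ef ler_wpM2l ?invr_ge0 ?ler0n //.
by apply: ler_sum => ta _; apply: h.
Qed.

End Expect.
Section Grad.
Variables (R : realType) (p : nat).

Lemma diff_sum_seq (I : Type) (r : seq I) (F : I -> 'rV[R]_p -> R) x v :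
  (forall j, differentiable (F j) x) ->
  'd (\sum_(j <- r) F j) x v = \sum_(j <- r) 'd (F j) x v.
Proof.
move=> dF; elim: r => [|a r IH].
  rewrite !big_nil; have := @diff_cst R _ R (0 : R) x.
  by move=> h; rewrite /= (_ : 0 = cst 0) // h.
have dS : differentiable (\sum_(j <- r) F j) x.
  apply: (big_ind (fun g => differentiable g x)) => //.
  by move=> ? ? h1 h2; exact: differentiableD.
by rewrite !big_cons diffD //= IH.
Qed.

Lemma grad_fi n m (f : 'I_n -> 'I_m -> 'rV[R]_p -> R) i x :
  (forall j, differentiable (f i j) x) ->
  grad (fi f i) x = m%:R^-1 *: \sum_(j < m) grad (f i j) x.
Proof.
move=> df.
have -> : fi f i = m%:R^-1 *: \sum_(j < m) f i j.
  by apply: funext => y; rewrite /fi /= fct_sumE.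
have dS : differentiable (\sum_(j < m) f i j) x by apply: differentiable_sum.
apply/rowP => c; rewrite !mxE diffZ //= diff_sum_seq // summxE.
by congr (_ * _); apply: eq_bigr => j _; rewrite mxE.
Qed.
End Grad.
Section Iter.
Variables (R : realType) (n m p : nat).
Variables (f : 'I_n -> 'I_m -> 'rV[R]_p -> R) (W : 'M[R]_n) (alpha : R) (x0 : 'rV[R]_p).

Lemma iterate_ext k (tau s tau' s' : nat -> 'I_n -> 'I_m) :
  (forall t, (t < k)%N -> tau t = tau' t) -> (forall t, (t < k)%N -> s t = s' t) ->
  iterate f W alpha x0 tau s k = iterate f W alpha x0 tau' s' k.
Proof.
elim: k => [//|k IH] ht hs /=.
rewrite IH; first by rewrite ht // hs.
- by move=> t tk; apply: ht; apply: ltnW.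
- by move=> t tk; apply: hs; apply: ltnW.
Qed.

Hypothesis Wcol : forall r, \sum_(i < n) W i r = 1.

Lemma col_sum (v : 'I_n -> 'rV[R]_p) :
  \sum_(i < n) \sum_(r < n) W i r *: v r = \sum_(r < n) v r.
Proof.
rewrite exchange_big /=; apply: eq_bigr => r _.
by rewrite -scaler_suml Wcol scale1r.
Qed.

Lemma track_step st ta sa :
  \sum_(i < n) st_y st i = \sum_(i < n) st_gprev st i ->
  \sum_(i < n) st_y (step f W alpha st ta sa) i =
  \sum_(i < n) st_gprev (step f W alpha st ta sa) i.
Proof.
move=> IH; rewrite /step; cbn [st_y st_gprev].
rewrite col_sum sumrB big_split IH.
by rewrite addrAC subrr add0r.
Qed.

Lemma track_inv tau s k :
  \sum_(i < n) st_y (iterate f W alpha x0 tau s k) i =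
  \sum_(i < n) st_gprev (iterate f W alpha x0 tau s k) i.
Proof.
elim: k => [|k IH]; first by rewrite !big1.
exact: track_step.
Qed.

Lemma xbar_step st ta sa :
  \sum_(i < n) st_y st i = \sum_(i < n) st_gprev st i ->
  xbar (step f W alpha st ta sa) =
  xbar st - alpha *: (n%:R^-1 *: \sum_(i < n) gsaga f st ta i).
Proof.
move=> hinv; rewrite /xbar /step; cbn [st_x].
rewrite col_sum sumrB -scaler_sumr col_sum sumrB big_split hinv addrAC subrr add0r scalerBr.
by rewrite !scalerA mulrC.
Qed.
End Iter.


Arguments Ef {R n m}.
Arguments E1 {R n m}.
Arguments E2 {R n m}.
Arguments Eprod {R n m}.
Arguments mR0 {R m}.
Arguments EfZ {R n m}.
Arguments EfD {R n m}.
Arguments EfB {R n m}.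
Arguments Ef_sum {R n m}.
Arguments Ef_cst {R n m}.
Arguments Ef_le {R n m}.



Lemma sum_if (R : realType) m (j : 'I_m) (A B : R) :
  \sum_(a < m) (if j == a then A else B) = A - B + m%:R * B.
Proof.
rewrite (eq_bigr (fun a => B + (j == a)%:R * (A - B))); last first.
  by move=> a _; case: (j == a); rewrite ?mul1r ?mul0r ?addr0 // addrC subrK.
rewrite big_split /= sumr_const card_ord -mulr_suml.
rewrite (bigD1 j) //= eqxx big1 ?addr0 ?mul1r; last by move=> a; rewrite eq_sym => /negbTE ->.
by rewrite mulr_natl addrC.
Qed.

Arguments sum_if {R m}.

Lemma aux_mn (R : realType) (a c S : R) k : (k%:R : R) != 0 ->
  k%:R^-1 * (k%:R^-1 * a *+ k + c * S) = k%:R^-1 * a + c * (k%:R^-1 * S).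
Proof. by move=> k0; rewrite -mulr_natl; field. Qed.

Section Core.
Variables (R : realType) (n m p : nat).
Hypotheses (n0 : (0 < n)%N) (m0 : (0 < m)%N).
Variables (x : 'I_n -> 'rV[R]_p) (z : 'I_n -> 'I_m -> 'rV[R]_p).

Lemma C1 (Y : 'rV[R]_p) :
  Ef (fun sa : {ffun 'I_n -> 'I_m} => n%:R^-1 * \sum_(i < n) (m%:R^-1 *
        \sum_(j < m) sqnorm (Y - (if j == sa i then x i else z i j)))) =
  m%:R^-1 * (n%:R^-1 * \sum_(i < n) sqnorm (Y - x i)) +
  (1 - m%:R^-1) * (n%:R^-1 * \sum_(i < n) (m%:R^-1 * \sum_(j < m) sqnorm (Y - z i j))).
Proof.
rewrite EfZ Ef_sum.
under eq_bigr => i _ do rewrite EfZ Ef_sum.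
under eq_bigr => i _ do under eq_bigr => j _ do rewrite (E1 m0 i (fun a => sqnorm (Y - (if j == a then x i else z i j)))).
have mR := mR0 (R:=R) m0.
have hif : forall i j, \sum_(a < m) sqnorm (Y - (if j == a then x i else z i j)) = sqnorm (Y - x i) - sqnorm (Y - z i j) + m%:R * sqnorm (Y - z i j).
  by move=> i j; rewrite -(sum_if j); apply: eq_bigr => a _; case: (j == a).
under eq_bigr => i _ do under eq_bigr => j _ do rewrite hif.
rewrite mulrCA [(1 - _) * _]mulrCA -mulrDr; congr (_ * _).
rewrite !mulr_sumr -big_split; apply: eq_bigr => i _.
rewrite (eq_bigr (fun j => m%:R^-1 * sqnorm (Y - x i) + (1 - m%:R^-1) * sqnorm (Y - z i j))); last first.
  by move=> j _; field.
rewrite big_split sumr_const card_ord -mulr_sumr.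
exact: aux_mn.
Qed.
End Core.


Arguments dot {R p}.

Lemma sumrDD (V : zmodType) I (r : seq I) (P : pred I) (F G : I -> V) :
  \sum_(i <- r | P i) (F i + G i) = \sum_(i <- r | P i) F i + \sum_(i <- r | P i) G i.
Proof. exact: big_split. Qed.
Arguments sumrDD {V I}.

Section Core2.
Variables (R : realType) (n m p : nat).
Hypotheses (n0 : (0 < n)%N) (m0 : (0 < m)%N).
Variables (x : 'I_n -> 'rV[R]_p) (z : 'I_n -> 'I_m -> 'rV[R]_p).
Variables (alpha : R) (G : 'rV[R]_p).
Let xb := n%:R^-1 *: \sum_(i < n) x i.

Lemma C2a : n%:R^-1 * \sum_(i < n) sqnorm (xb - alpha *: G - x i) =
  n%:R^-1 * \sum_(i < n) sqnorm (x i - xb) + alpha ^+ 2 * sqnorm G.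
Proof.
have nR := mR0 (R:=R) n0.
under eq_bigr => i _ do rewrite addrAC sqnormBZ.
rewrite !big_split /= sumrN -!mulr_sumr -dot_suml sumrB sumr_const card_ord.
have -> : xb *+ n - \sum_(i < n) x i = 0.
  by rewrite /xb -scaler_nat scalerA mulfV // scale1r subrr.
rewrite dot0l mulr0 oppr0 addr0 sumr_const card_ord.
rewrite (eq_bigr (fun i => sqnorm (x i - xb))); last by move=> i _; rewrite sqnormBC.
by rewrite -[sqnorm G *+ n]mulr_natl; field.
Qed.

Lemma lin1 k0 (a d : 'I_k0 -> R) (c kk : R) : (k0%:R : R) != 0 ->
  k0%:R^-1 * \sum_(j < k0) (a j - kk * d j + c) =
  k0%:R^-1 * \sum_(j < k0) a j - kk * (k0%:R^-1 * \sum_(j < k0) d j) + c.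
Proof.
move=> h; rewrite sumrDD sumrB -mulr_sumr sumr_const card_ord.
by rewrite -[c *+ k0]mulr_natl; field.
Qed.

Lemma avg2_lin (a d : 'I_n -> 'I_m -> R) (c kk : R) :
  n%:R^-1 * \sum_(i < n) (m%:R^-1 * \sum_(j < m) (a i j - kk * d i j + c)) =
  n%:R^-1 * \sum_(i < n) (m%:R^-1 * \sum_(j < m) a i j)
  - kk * (n%:R^-1 * \sum_(i < n) (m%:R^-1 * \sum_(j < m) d i j)) + c.
Proof.
have nR := mR0 (R:=R) n0; have mR := mR0 (R:=R) m0.
under eq_bigr => i _ do rewrite lin1 //.
by rewrite lin1.
Qed.

Lemma C2b : n%:R^-1 * \sum_(i < n) (m%:R^-1 * \sum_(j < m) sqnorm (xb - alpha *: G - z i j)) =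
  n%:R^-1 * \sum_(i < n) (m%:R^-1 * \sum_(j < m) sqnorm (xb - z i j))
  - 2 * alpha * (n%:R^-1 * \sum_(i < n) (m%:R^-1 * \sum_(j < m) dot (xb - z i j) G))
  + alpha ^+ 2 * sqnorm G.
Proof.
under eq_bigr => i _ do under eq_bigr => j _ do rewrite addrAC sqnormBZ.
exact: avg2_lin.
Qed.
End Core2.


Arguments dot {R p}.

Section Var.
Variables (R : realType) (n m : nat).
Hypotheses (n0 : (0 < n)%N) (m0 : (0 < m)%N).

Lemma var_le (u : 'I_m -> R) :
  \sum_(a < m) (u a - m%:R^-1 * \sum_(b < m) u b) ^+ 2 <= \sum_(a < m) u a ^+ 2.
Proof.
have mR := mR0 (R:=R) m0.
set S := \sum_(b < m) u b.
rewrite (eq_bigr (fun a => u a ^+ 2 - 2 * (m%:R^-1 * S) * u a + (m%:R^-1 * S) ^+ 2)); last first.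
  by move=> a _; ring.
rewrite sumrDD sumrB -mulr_sumr sumr_const card_ord -/S -[(_ ^+ 2) *+ m]mulr_natl.
rewrite -subr_ge0.
have -> : \sum_(a < m) u a ^+ 2 - (\sum_(a < m) u a ^+ 2 - 2 * (m%:R^-1 * S) * S + m%:R * (m%:R^-1 * S) ^+ 2) = m%:R^-1 * S ^+ 2.
  by field.
by apply: mulr_ge0; [rewrite invr_ge0 ler0n|apply: sqr_ge0].
Qed.

Lemma EvarSum (h : 'I_n -> 'I_m -> R) : (forall i, \sum_(a < m) h i a = 0) ->
  Ef (fun ta : {ffun 'I_n -> 'I_m} => (\sum_(i < n) h i (ta i)) ^+ 2) =
  \sum_(i < n) (m%:R^-1 * \sum_(a < m) h i a ^+ 2).
Proof.
move=> h0.
have -> : (fun ta : {ffun 'I_n -> 'I_m} => (\sum_(i < n) h i (ta i)) ^+ 2) =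
   (fun ta => \sum_(i < n) \sum_(i' < n) h i (ta i) * h i' (ta i')).
  by apply: funext => ta; rewrite expr2 mulr_suml; apply: eq_bigr => i _; rewrite mulr_sumr.
rewrite Ef_sum; apply: eq_bigr => i _.
rewrite Ef_sum (bigD1 i) //= big1 ?addr0.
  by rewrite (E1 m0 i (fun a => h i a * h i a)); under eq_bigr => a _ do rewrite expr2.
move=> i' ii'; rewrite (E2 m0 i i' (h i) (h i')); last by rewrite eq_sym.
by rewrite h0 !mulr0 mul0r.
Qed.
End Var.


Arguments dot {R p}.
Arguments var_le {R m}.
Arguments EvarSum {R n m}.

Lemma sq_exp (R : realType) (a b k : R) : k != 0 ->
  (a + k^-1 * b) ^+ 2 = a ^+ 2 + 2 * a * (k^-1 * b) + k ^- 2 * b ^+ 2.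
Proof. by move=> k0; field. Qed.

Lemma mxBE (R : realType) k l (A B : 'M[R]_(k, l)) i j : (A - B) i j = A i j - B i j.
Proof. by rewrite !mxE. Qed.
Lemma mxZE (R : realType) k l (a : R) (A : 'M[R]_(k, l)) i j : (a *: A) i j = a * A i j.
Proof. by rewrite !mxE. Qed.

Section GV.
Variables (R : realType) (n m p : nat).
Hypotheses (n0 : (0 < n)%N) (m0 : (0 < m)%N).
Variables (f : 'I_n -> 'I_m -> 'rV[R]_p -> R).
Hypothesis fdiff : forall i j y, differentiable (f i j) y.
Variables (x : 'I_n -> 'rV[R]_p) (z : 'I_n -> 'I_m -> 'rV[R]_p).

Definition Xs i a := grad (f i a) (x i) - grad (f i a) (z i a).
Definition ee i := m%:R^-1 *: \sum_(j < m) grad (f i j) (z i j).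
Definition gi i a := Xs i a + ee i.
Definition mu i := m%:R^-1 *: \sum_(a < m) Xs i a.
Definition GG (ta : 'I_n -> 'I_m) := n%:R^-1 *: \sum_(i < n) gi i (ta i).
Definition DD := n%:R^-1 *: \sum_(i < n) grad (fi f i) (x i).

Lemma gradfi_mu i : grad (fi f i) (x i) = mu i + ee i.
Proof.
rewrite grad_fi; last by move=> j; apply: fdiff.
by rewrite /mu /ee -scalerDr /Xs sumrB subrK.
Qed.

Lemma mu_sum i : \sum_(a < m) (Xs i a - mu i) = 0.
Proof.
have mR := mR0 (R:=R) m0.
rewrite sumrB sumr_const card_ord /mu -scaler_nat scalerA mulfV // scale1r.
by rewrite subrr.
Qed.

Lemma GG_D ta c : GG ta 0 c = DD 0 c + n%:R^-1 * \sum_(i < n) (Xs i (ta i) - mu i) 0 c.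
Proof.
rewrite /GG /DD.
under [in RHS]eq_bigr => i _ do rewrite gradfi_mu.
rewrite !mxE !summxE -mulrDr -sumrDD; congr (_ * _); apply: eq_bigr => i _.
have -> : (mu i + ee i) 0 c + (Xs i (ta i) - mu i) 0 c = (mu i + ee i + (Xs i (ta i) - mu i)) 0 c.
  by rewrite [in RHS]mxE.
by rewrite /gi [mu i + ee i + _]addrC addrA subrK.
Qed.

Lemma EGc c : Ef (fun ta : {ffun 'I_n -> 'I_m} => n%:R^-1 * \sum_(i < n) (Xs i (ta i) - mu i) 0 c) = 0.
Proof.
rewrite EfZ Ef_sum big1 ?mulr0 // => i _.
rewrite (E1 m0 i (fun a => (Xs i a - mu i) 0 c)).
by rewrite -summxE mu_sum mxE mulr0.
Qed.

Lemma Edot v : Ef (fun ta : {ffun 'I_n -> 'I_m} => dot v (GG ta)) = dot v DD.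
Proof.
rewrite /dot Ef_sum; apply: eq_bigr => c _.
under eq_fun => ta do rewrite GG_D mulrDr.
by rewrite EfD Ef_cst // EfZ EGc mulr0 addr0.
Qed.

Lemma EsqG : Ef (fun ta : {ffun 'I_n -> 'I_m} => sqnorm (GG ta)) <=
  sqnorm DD + n%:R^-2 * \sum_(i < n) (m%:R^-1 * \sum_(a < m) sqnorm (Xs i a)).
Proof.
have nR := mR0 (R:=R) n0; have mR := mR0 (R:=R) m0.
rewrite /sqnorm Ef_sum.
under eq_bigr => c _ do under eq_fun => ta do rewrite GG_D.
have H : forall c, Ef (fun ta : {ffun 'I_n -> 'I_m} => (DD 0 c + n%:R^-1 * \sum_(i < n) (Xs i (ta i) - mu i) 0 c) ^+ 2)
   = DD 0 c ^+ 2 + n%:R^-2 * \sum_(i < n) (m%:R^-1 * \sum_(a < m) ((Xs i a - mu i) 0 c) ^+ 2).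
  move=> c.
  under eq_fun => ta do rewrite sq_exp //.
  rewrite !EfD Ef_cst // EfZ EGc mulr0 addr0 EfZ (EvarSum m0 (fun i a => (Xs i a - mu i) 0 c)) //.
  by move=> i; rewrite -summxE mu_sum mxE.
under eq_bigr => c _ do rewrite H.
rewrite sumrDD lerD2l -mulr_sumr ler_wpM2l ?invr_ge0 ?exprn_ge0 ?ler0n //.
rewrite exchange_big /=; apply: ler_sum => i _.
rewrite -mulr_sumr ler_wpM2l ?invr_ge0 ?ler0n //.
rewrite [X in _ <= X]exchange_big /=; apply: ler_sum => c _.
have := var_le m0 (fun a => Xs i a 0 c).
set L1 := (X in X <= _ -> _); set R1 := (X in _ <= X -> _) => h.
apply: le_trans h; rewrite le_eqVlt; apply/orP; left; apply/eqP.
by rewrite /L1; apply: eq_bigr => a _; rewrite mxBE /mu mxZE summxE.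
Qed.
End GV.


Arguments dot {R p}.
Arguments avg2_lin {R n m}. Arguments young {R p}. Arguments C1 {R n m p}.
Arguments C2a {R n p}. Arguments C2b {R n m p}. Arguments EsqG {R n m p}.
Arguments Edot {R n m p}. Arguments GG {R n m p}. Arguments DD {R n m p}.
Arguments Xs {R n m p}. Arguments sqnormD_le {R p}. Arguments xbar_step {R n m p}.
Arguments track_inv {R n m p}. Arguments iterate_ext {R n m p}.

Lemma final_arith (R : realType) (q a b K T C SD ES A : R) :
  0 <= q <= 1 -> 0 < a -> 0 < b -> 0 <= T -> 0 <= C -> 0 <= SD -> 0 <= K ->
  - (2 * a * A) <= a * b * T + a / b * SD -> ES <= SD + K * (C + T) ->
  q * C + (1 - q) * (T - 2 * a * A) + a ^+ 2 * ES <=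
  (1 - q + a * b + a ^+ 2 * K) * T + (2 * a ^+ 2 + a / b) * SD + (a ^+ 2 * K + 2 * q) * C.
Proof.
move=> /andP[q0 q1] a0 b0 T0 C0 SD0 K0 hA hE.
have h1 : (1 - q) * (T - 2 * a * A) <= (1 - q) * (T + (a * b * T + a / b * SD)).
  by apply: ler_wpM2l; [rewrite subr_ge0|rewrite lerD2l].
have h2 : a ^+ 2 * ES <= a ^+ 2 * (SD + K * (C + T)).
  by apply: ler_wpM2l; [apply: sqr_ge0|].
apply: le_trans (lerD (lerD (lexx _) h1) h2) _.
set ab := a / b.
have ab0 : 0 <= ab by apply: divr_ge0; apply: ltW.
have abT : 0 <= a * b * T by apply: mulr_ge0 => //; apply: mulr_ge0; apply: ltW.
rewrite -subr_ge0.
have -> : (1 - q + a * b + a ^+ 2 * K) * T + (2 * a ^+ 2 + ab) * SD + (a ^+ 2 * K + 2 * q) * C -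
  (q * C + (1 - q) * (T + (a * b * T + ab * SD)) + a ^+ 2 * (SD + K * (C + T))) =
  q * (a * b * T) + a ^+ 2 * SD + q * (ab * SD) + q * C by ring.
do !apply: addr_ge0; apply: mulr_ge0 => //; try exact: sqr_ge0; exact: mulr_ge0.
Qed.

Lemma lips_sq (R : realType) p (L : R) (u v : 'rV[R]_p) : 0 < L ->
  enorm u <= L * enorm v -> sqnorm u <= L ^+ 2 * sqnorm v.
Proof.
move=> L0 h.
have -> : sqnorm u = enorm u ^+ 2 by rewrite /enorm sqr_sqrtr // sqnorm_ge0.
have -> : sqnorm v = enorm v ^+ 2 by rewrite /enorm sqr_sqrtr // sqnorm_ge0.
rewrite -exprMn expr2 [X in _ <= X]expr2.
by apply: ler_pM => //; rewrite sqrtr_ge0.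
Qed.

Section Main.
Variables (R : realType) (n m p : nat).
Hypotheses (n0 : (0 < n)%N) (m0 : (0 < m)%N).

Lemma avg2Z (c : R) (s : 'I_n -> 'I_m -> R) :
  n%:R^-1 * \sum_(i < n) (m%:R^-1 * \sum_(j < m) (c * s i j)) =
  c * (n%:R^-1 * \sum_(i < n) (m%:R^-1 * \sum_(j < m) s i j)).
Proof.
rewrite [RHS]mulrCA [c * _]mulr_sumr; congr (_ * _); apply: eq_bigr => i _.
by rewrite [RHS]mulrCA -mulr_sumr.
Qed.

Lemma avg2_ge0 (s : 'I_n -> 'I_m -> R) : (forall i j, 0 <= s i j) ->
  0 <= n%:R^-1 * \sum_(i < n) (m%:R^-1 * \sum_(j < m) s i j).
Proof.
move=> h; apply: mulr_ge0; first by rewrite invr_ge0 ler0n.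
apply: sumr_ge0 => i _; apply: mulr_ge0; first by rewrite invr_ge0 ler0n.
by apply: sumr_ge0 => j _.
Qed.

Lemma avg2_young (a b : R) (v : 'I_n -> 'I_m -> 'rV[R]_p) (D : 'rV[R]_p) :
  0 < a -> 0 < b ->
  - (2 * a * (n%:R^-1 * \sum_(i < n) (m%:R^-1 * \sum_(j < m) dot (v i j) D))) <=
  a * b * (n%:R^-1 * \sum_(i < n) (m%:R^-1 * \sum_(j < m) sqnorm (v i j))) + a / b * sqnorm D.
Proof.
move=> a0 b0; rewrite -subr_ge0 opprK -avg2Z.
have := avg2_lin n0 m0 (fun i j => a * b * sqnorm (v i j)) (fun i j => dot (v i j) D) (a / b * sqnorm D) (- (2 * a)).
rewrite mulNr opprK => h; rewrite addrAC -h.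
apply: avg2_ge0 => i j; rewrite mulNr opprK.
have := young (v i j) D a b a0 b0; rewrite -subr_ge0 opprK.
by rewrite addrAC.
Qed.
Lemma var_bound (f : 'I_n -> 'I_m -> 'rV[R]_p -> R) (L : R) (L0 : 0 < L)
  (hL : forall i j y y', enorm (grad (f i j) y - grad (f i j) y') <= L * enorm (y - y'))
  (x : 'I_n -> 'rV[R]_p) (z : 'I_n -> 'I_m -> 'rV[R]_p) (xb : 'rV[R]_p) :
  n%:R ^- 2 * \sum_(i < n) (m%:R^-1 * \sum_(a < m) sqnorm (Xs f x z i a)) <=
  2 * L ^+ 2 / n%:R * (n%:R^-1 * \sum_(i < n) sqnorm (x i - xb) +
     n%:R^-1 * \sum_(i < n) (m%:R^-1 * \sum_(a < m) sqnorm (xb - z i a))).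
Proof.
have nR := mR0 (R:=R) n0; have mR := mR0 (R:=R) m0.
apply: (@le_trans _ _ (n%:R ^- 2 * \sum_(i < n) (m%:R^-1 * \sum_(a < m)
    (2 * L ^+ 2 * sqnorm (x i - xb) + 2 * L ^+ 2 * sqnorm (xb - z i a))))).
  rewrite ler_wpM2l ?invr_ge0 ?exprn_ge0 ?ler0n //; apply: ler_sum => i _.
  rewrite ler_wpM2l ?invr_ge0 ?ler0n //; apply: ler_sum => a _.
  apply: le_trans (@lips_sq R p L _ _ L0 (hL i a (x i) (z i a))) _.
  have e : x i - z i a = (x i - xb) + (xb - z i a) by rewrite addrA subrK.
  rewrite e; apply: le_trans (ler_wpM2l _ (sqnormD_le _ _)) _; first exact: sqr_ge0.
  by rewrite le_eqVlt; apply/orP; left; apply/eqP; ring.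
rewrite le_eqVlt; apply/orP; left; apply/eqP.
under eq_bigr => i _ do rewrite sumrDD sumr_const card_ord -mulr_sumr.
under eq_bigr => i _ do rewrite mulrDr.
rewrite sumrDD.
set U := \sum_(i < n) sqnorm (x i - xb).
set V := \sum_(i < n) (m%:R^-1 * \sum_(a < m) sqnorm (xb - z i a)).
have -> : \sum_(i < n) (m%:R^-1 * (2 * L ^+ 2 * sqnorm (x i - xb) *+ m)) = 2 * L ^+ 2 * U.
  rewrite /U mulr_sumr; apply: eq_bigr => i _; rewrite -[2 * L ^+ 2 * sqnorm (x i - xb) *+ m]mulr_natl; by field.
have -> : \sum_(i < n) (m%:R^-1 * (2 * L ^+ 2 * \sum_(a < m) sqnorm (xb - z i a))) = 2 * L ^+ 2 * V.
  rewrite /V mulr_sumr; apply: eq_bigr => i _; ring.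
by field.
Qed.
End Main.


Arguments dot {R p}.
Arguments avg2_lin {R n m}. Arguments young {R p}. Arguments C1 {R n m p}.
Arguments C2a {R n p}. Arguments C2b {R n m p}. Arguments EsqG {R n m p}.
Arguments Edot {R n m p}. Arguments GG {R n m p}. Arguments DD {R n m p}.
Arguments Xs {R n m p}. Arguments sqnormD_le {R p}. Arguments xbar_step {R n m p}.
Arguments track_inv {R n m p}. Arguments iterate_ext {R n m p}.
Arguments avg2_young {R n m p}. Arguments var_bound {R n m p}.
Arguments final_arith {R q a b K T C SD ES A}.

Lemma EfN (R : realType) n m (phi : {ffun 'I_n -> 'I_m} -> R) :
  Ef (fun ta => - phi ta) = - Ef phi.
Proof. by rewrite /Ef sumrN mulrN. Qed.

Theorem lemma5 (R : realType) (n m p : nat)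
  (f : 'I_n -> 'I_m -> 'rV[R]_p -> R) (L : R) (W : 'M[R]_n)
  (alpha beta : R) (x0 : 'rV[R]_p) :
  (0 < n)%N -> (0 < m)%N -> (0 < p)%N ->
  0 < L ->
  (forall i j, Lsmooth L (f i j)) ->
  (exists B : R, forall x, B <= Fobj f x) ->
  doubly_stochastic_nonneg W -> primitive_mx W ->
  0 < alpha -> 0 < beta ->
  let theta := 1 - m%:R^-1 + alpha * beta + 2 * alpha ^+ 2 * L ^+ 2 / n%:R in
  forall (tau s : nat -> 'I_n -> 'I_m) (k : nat),
    condE_k k (fun tau' s' => tk (iterate f W alpha x0 tau' s' k.+1)) tau s
    <= theta * tk (iterate f W alpha x0 tau s k)
       + (2 * alpha ^+ 2 + alpha / beta)
           * sqnorm (avg_grad f (iterate f W alpha x0 tau s k))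
       + (2 * alpha ^+ 2 * L ^+ 2 / n%:R + 2 / m%:R)
           * (n%:R^-1 * consensus_err (iterate f W alpha x0 tau s k)).
Proof.
move=> n0 m0 p0 L0 hsm _ [Wnn [Wrow Wcol]] _ a0 b0 theta tau s k.
have nR := mR0 (R:=R) n0; have mR := mR0 (R:=R) m0.
have fdiff : forall i j y, differentiable (f i j) y by move=> i j; case: (hsm i j).
have hL : forall i j y y', enorm (grad (f i j) y - grad (f i j) y') <= L * enorm (y - y').
  by move=> i j; case: (hsm i j).
have hinv := track_inv f W alpha x0 Wcol tau s k.
set st := iterate f W alpha x0 tau s k in hinv *.
have E0 : condE_k k (fun tau' s' => tk (iterate f W alpha x0 tau' s' k.+1)) tau s =
   Ef (fun ta : {ffun 'I_n -> 'I_m} => Ef (fun sa : {ffun 'I_n -> 'I_m} => tk (step f W alpha st ta sa))).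
  rewrite /condE_k /Ef invfM -mulrA mulr_sumr; congr (_ * _); apply: eq_bigr => ta _.
  congr (_ * _); apply: eq_bigr => sa _.
  change (tk (step f W alpha (iterate f W alpha x0 (upd tau k ta) (upd s k sa) k) (upd tau k ta k) (upd s k sa k)) = tk (step f W alpha st ta sa)).
  have -> : iterate f W alpha x0 (upd tau k ta) (upd s k sa) k = st.
    by apply: iterate_ext => t tk; rewrite /upd (ltn_eqF tk).
  by rewrite /upd eqxx.
set G := fun ta : 'I_n -> 'I_m => GG f (st_x st) (st_z st) ta.
set Af := fun v : 'rV[R]_p => n%:R^-1 * \sum_(i < n) (m%:R^-1 * \sum_(j < m) dot (xbar st - st_z st i j) v).
have E1' : forall ta : {ffun 'I_n -> 'I_m},
  Ef (fun sa : {ffun 'I_n -> 'I_m} => tk (step f W alpha st ta sa)) =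
  m%:R^-1 * (n%:R^-1 * consensus_err st + alpha ^+ 2 * sqnorm (G ta)) +
  (1 - m%:R^-1) * (tk st - 2 * alpha * Af (G ta) + alpha ^+ 2 * sqnorm (G ta)).
  move=> ta.
  have htk : forall sa : {ffun 'I_n -> 'I_m}, tk (step f W alpha st ta sa) =
    n%:R^-1 * \sum_(i < n) (m%:R^-1 * \sum_(j < m) sqnorm ((xbar st - alpha *: G ta) -
       (if j == sa i then st_x st i else st_z st i j))).
    by move=> sa; rewrite /tk (xbar_step f W alpha Wcol st ta sa hinv).
  under eq_fun => sa do rewrite htk.
  rewrite (C1 m0) /xbar (C2a n0) (C2b n0 m0).
  by [].
rewrite E0; under eq_fun => ta do rewrite E1'.
rewrite EfD !EfZ EfD EfD EfD EfN !EfZ !(Ef_cst m0).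
have EA : Ef (fun ta : {ffun 'I_n -> 'I_m} =>
       \sum_(i < n) (m%:R^-1 * \sum_(j < m) dot (xbar st - st_z st i j) (G ta))) =
     \sum_(i < n) (m%:R^-1 * \sum_(j < m) dot (xbar st - st_z st i j) (DD f (st_x st))).
  rewrite Ef_sum; apply: eq_bigr => i _.
  rewrite EfZ Ef_sum; congr (_ * _); apply: eq_bigr => j _.
  exact: (Edot m0 f fdiff).
rewrite EA.
set ES := Ef (fun ta : {ffun 'I_n -> 'I_m} => sqnorm (G ta)).
set T := n%:R^-1 * \sum_(i < n) (m%:R^-1 * \sum_(j < m) sqnorm (xbar st - st_z st i j)).
set C := n%:R^-1 * consensus_err st.
set D := DD f (st_x st).
set A := n%:R^-1 * \sum_(i < n) (m%:R^-1 * \sum_(j < m) dot (xbar st - st_z st i j) D).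
have -> : avg_grad f st = D by [].
have -> : tk st = T by [].
have q01 : 0 <= (m%:R : R)^-1 <= 1.
  by rewrite invr_ge0 ler0n /= invf_le1 ?ler1n // ltr0n.
have T0 : 0 <= T by apply: avg2_ge0 => i j; apply: sqnorm_ge0.
have C0 : 0 <= C.
  by apply: mulr_ge0; [rewrite invr_ge0 ler0n|apply: sumr_ge0 => i _; apply: sqnorm_ge0].
have K0 : 0 <= 2 * L ^+ 2 / n%:R.
  by apply: mulr_ge0; [apply: mulr_ge0 => //; apply: sqr_ge0|rewrite invr_ge0 ler0n].
have hA := avg2_young n0 m0 alpha beta (fun i j => xbar st - st_z st i j) D a0 b0.
have hE : ES <= sqnorm D + 2 * L ^+ 2 / n%:R * (C + T).
  apply: le_trans (EsqG n0 m0 f fdiff (st_x st) (st_z st)) _.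
  rewrite lerD2l.
  exact: (var_bound n0 m0 f L L0 hL (st_x st) (st_z st) (xbar st)).
have := final_arith q01 a0 b0 T0 C0 (@sqnorm_ge0 R p D) K0 hA hE.
rewrite -/A => h.
have -> : m%:R^-1 * (C + alpha ^+ 2 * ES) + (1 - m%:R^-1) * (T - 2 * alpha * A + alpha ^+ 2 * ES)
  = m%:R^-1 * C + (1 - m%:R^-1) * (T - 2 * alpha * A) + alpha ^+ 2 * ES by ring.
apply: le_trans h _.
by rewrite /theta le_eqVlt; apply/orP; left; apply/eqP; ring.
Qed.
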